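(* (1) $\mathcal{K}^{\mathsf{TJ}}(K_n)=\{k:k\ge1\}$ for every $n\ge1$. (2) $\mathcal{K}^{\mathsf{TJ}}(P_2)=\{k:k\ge1\}$, $\mathcal{K}^{\mathsf{TJ}}(P_n)=\{k:k\ge2\}$ for $n\ge3$; $\mathcal{K}^{\mathsf{TJ}}(C_3)=\{k:k\ge1\}$, $\mathcal{K}^{\mathsf{TJ}}(C_n)=\{k:k\ge2\}$ for $n\ge4$. (3) $\mathcal{K}^{\mathsf{TJ}}(K_{1,1})=\{k:k\ge1\}$, $\mathcal{K}^{\mathsf{TJ}}(K_{1,2})=\{k:k\ge2\}$, $\mathcal{K}^{\mathsf{TJ}}(K_{1,n})=\{k:k\ge n\}$ for $n\ge3$; and $\mathcal{K}^{\mathsf{TJ}}(K_{m,n})=\varnothing$ whenever $2\le m\le n$ and $n\ge3$. (4) $\mathcal{K}^{\mathsf{TJ}}(B_1)=\{k:k\ge1\}$, $\mathcal{K}^{\mathsf{TJ}}(B_2)=\{2\}$, and $\mathcal{K}^{\mathsf{TJ}}(B_p)=\varnothing$ for $p\ge3$. (5) $\mathcal{K}^{\mathsf{TJ}}(F_1)=\{k:k\ge1\}$ and $\mathcal{K}^{\mathsf{TJ}}(F_p)=\{k:k\ge p\}$ for $p\ge2$.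
   Context: All graphs are finite, simple, undirected. A $k$-clique of a graph $H$ is a set of $k$ pairwise adjacent vertices. For a graph $H$ and integer $k\ge1$, the Token Jumping graph $\mathsf{TJ}_k(H)$ has as vertices the $k$-cliques of $H$, and two $k$-cliques $A,B$ are adjacent iff $|A\cap B|=k-1$. For a graph $G$, $\mathcal{K}^{\mathsf{TJ}}(G)=\{k\ge1:\ \exists H,\ \mathsf{TJ}_k(H)\cong G\}$. $K_n$, $P_n$, $C_n$ denote the complete graph, path, cycle on $n$ vertices; $K_{m,n}$ the complete bipartite graph. The book graph $B_p$ consists of $p$ triangles sharing a common edge; the friendship graph $F_p$ consists of $p$ triangles sharing a common vertex. *)

(* Defs.v *)
From mathcomp Require Import all_boot.
Set Implicit Arguments. Unset Strict Implicit. Unset Printing Implicit Defensive.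

Definition simple_graph (V : finType) (e : rel V) : Prop :=
  symmetric e /\ irreflexive e.

Definition is_kclique (T : finType) (H : rel T) (k : nat) (A : {set T}) : bool :=
  (#|A| == k) && [forall x in A, forall y in A, (x != y) ==> H x y].

(* TJ_k(H) is isomorphic to the graph (V, e): there is a bijection f from V
   onto the set of k-cliques of H such that x ~ y iff |f x ∩ f y| = k - 1. *)
Definition TJ_iso (V : finType) (e : rel V) (T : finType) (H : rel T) (k : nat) : Prop :=
  exists f : V -> {set T},
    injective f /\
    (forall A : {set T}, is_kclique H k A <-> exists x : V, f x = A) /\
    (forall x y : V, e x y = (#|f x :&: f y| == k.-1)).

Definition KTJ (V : finType) (e : rel V) (k : nat) : Prop :=
  1 <= k /\ exists (T : finType) (H : rel T), simple_graph H /\ TJ_iso e H k.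

Definition complete_rel (n : nat) : rel 'I_n := fun x y => x != y.
Definition path_rel (n : nat) : rel 'I_n :=
  fun x y => ((x : nat).+1 == y) || ((y : nat).+1 == x).
Definition cycle_rel (n : nat) : rel 'I_n :=
  fun x y => (((x : nat).+1 %% n) == y) || (((y : nat).+1 %% n) == x).
Definition cbip_rel (m n : nat) : rel ('I_m + 'I_n)%type :=
  fun x y => match x, y with
             | inl _, inr _ => true
             | inr _, inl _ => true
             | _, _ => false
             end.
(* Book graph B_p on 'I_(p+2): spine edge {0,1}, apexes 2..p+1 each adjacent to 0 and 1 *)
Definition book_rel (p : nat) : rel 'I_(p.+2) :=
  fun x y => (x != y) && (((x : nat) < 2) || ((y : nat) < 2)).
(* Friendship graph F_p on 'I_(2p+1): center 0; triangles {0, 2i+1, 2i+2} *)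
Definition friend_rel (p : nat) : rel 'I_(p.*2.+1) :=
  fun x y => (x != y) &&
    [|| (x : nat) == 0, (y : nat) == 0 | ((x : nat).-1)./2 == ((y : nat).-1)./2].

Arguments complete_rel n : clear implicits.
Arguments path_rel n : clear implicits.
Arguments cycle_rel n : clear implicits.
Arguments cbip_rel m n : clear implicits.
Arguments book_rel p : clear implicits.
Arguments friend_rel p : clear implicits.

(* Main.v *)
Require Import Defs.
From mathcomp Require Import all_boot zify.
Set Implicit Arguments. Unset Strict Implicit. Unset Printing Implicit Defensive.


Section TJ.
Variables (V T : finType) (e : rel V) (H : rel T) (k : nat) (f : V -> {set T}).
Hypothesis finj : injective f.
Hypothesis fcl : forall A : {set T}, is_kclique H k A <-> exists x : V, f x = A.
Hypothesis fe : forall x y : V, e x y = (#|f x :&: f y| == k.-1).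

Lemma f_clique x : is_kclique H k (f x).
Proof. by apply/fcl; exists x. Qed.

Lemma card_f x : #|f x| = k.
Proof. by have /andP[/eqP ->] := f_clique x. Qed.

Lemma f_adj x a b : a \in f x -> b \in f x -> a != b -> H a b.
Proof.
move=> ha hb ab; have /andP[_ /forallP /(_ a)] := f_clique x.
by rewrite ha /= => /forallP /(_ b); rewrite hb ab.
Qed.

Lemma capf_lt x y : x != y -> #|f x :&: f y| < k.
Proof.
move=> xy; rewrite -(card_f x) ltn_neqAle subset_leq_card ?subsetIl // andbT.
apply/negP => /eqP h; move/eqP: xy; apply; apply: finj.
have s1 : f x \subset f y.
  have e1 : f x :&: f y = f x by apply/eqP; rewrite eqEcard subsetIl h leqnn.
  by rewrite -e1 subsetIr.
apply/eqP; rewrite eqEcard s1 /= !card_f //.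
Qed.

Lemma KEY x y : x != y -> k.-1 <= #|f x :&: f y| -> e x y.
Proof. move=> xy h; have := capf_lt xy; rewrite fe; lia. Qed.

Lemma NONADJ x y : x != y -> ~~ e x y -> (#|f x :&: f y|).+2 <= k.
Proof. move=> xy; have := capf_lt xy; rewrite fe; lia. Qed.

Lemma ADJ x y : e x y -> #|f x :&: f y| = k.-1.
Proof. by rewrite fe => /eqP. Qed.

End TJ.


Section TJ2.
Variables (V T : finType) (e : rel V) (H : rel T) (k : nat) (f : V -> {set T}).
Hypothesis finj : injective f.
Hypothesis fcl : forall A : {set T}, is_kclique H k A <-> exists x : V, f x = A.
Hypothesis fe : forall x y : V, e x y = (#|f x :&: f y| == k.-1).
Hypothesis kpos : 0 < k.

Let cf := card_f fcl.

Lemma adj_miss x y a : e x y -> a \in f x -> a \notin f y -> f x :\ a \subset f y.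
Proof.
move=> exy ax ay.
have s : f x :&: f y \subset f x :\ a.
  apply/subsetP=> b; rewrite !inE => /andP[bx by_]; rewrite bx andbT.
  by apply/eqP=> ba; move: ay; rewrite -ba by_.
have c1 : #|f x :\ a| = k.-1 by move: (cardsD1 a (f x)); rewrite ax cf; lia.
have : f x :&: f y == f x :\ a by rewrite eqEcard s c1 (ADJ fe exy) leqnn.
by move/eqP <-; apply: subsetIr.
Qed.

Lemma adj_miss_ex x y : e x y -> exists2 a, a \in f x & a \notin f y.
Proof.
move=> exy; have := cardsID (f y) (f x); rewrite (ADJ fe exy) cf => h.
have : 0 < #|f x :\: f y| by lia.
by case/card_gt0P=> a; rewrite inE => /andP[ay ax]; exists a.
Qed.

Lemma rook x (N : {set V}) : (forall y, y \in N -> e x y) ->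
  (forall y y', y \in N -> y' \in N -> y != y' -> ~~ e y y') -> #|N| <= k.
Proof.
move=> hN hNN.
case: (set_0Vmem (f x)) => [f0|[t0 _]].
  by have := cf x; rewrite f0 cards0; lia.
pose r y := odflt t0 [pick a in f x :\: f y].
have rP y : y \in N -> r y \in f x :\: f y.
  move=> yN; rewrite /r; case: pickP => [a -> //|/= none].
  have [a ax ay] := adj_miss_ex (hN y yN).
  by have := none a; rewrite inE ax ay.
have rinj : {in N &, injective r}.
  move=> y y' yN y'N ryy; apply/eqP; apply/negPn/negP => yy'.
  have := hNN _ _ yN y'N yy'; move/negP; apply.
  apply: (KEY finj fcl fe yy').
  have := rP _ yN; have := rP _ y'N; rewrite ryy !inE => /andP[a1 a2] /andP[a3 _].
  have s : f x :\ r y' \subset f y :&: f y'.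
    by rewrite subsetI (adj_miss (hN y yN) a2 a3) (adj_miss (hN y' y'N) a2 a1).
  have c1 : #|f x :\ r y'| = k.-1 by move: (cardsD1 (r y') (f x)); rewrite a2 cf; lia.
  by rewrite -c1; apply: subset_leq_card.
rewrite -(card_in_imset rinj) -(cf x) subset_leq_card //.
by apply/subsetP=> _ /imsetP[y yN ->]; have := rP _ yN; rewrite inE => /andP[].
Qed.

End TJ2.


Section TJ3.
Variables (V T : finType) (e : rel V) (H : rel T) (k : nat) (f : V -> {set T}).
Hypothesis finj : injective f.
Hypothesis fcl : forall A : {set T}, is_kclique H k A <-> exists x : V, f x = A.
Hypothesis fe : forall x y : V, e x y = (#|f x :&: f y| == k.-1).
Hypothesis kpos : 0 < k.

Let cf := card_f fcl.

Lemma YI_eq (Y X X' : {set T}) : (Y :&: X) :&: (Y :&: X') = Y :&: (X :&: X').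
Proof. by apply/setP=> z; rewrite !inE; case: (z \in Y); case: (z \in X). Qed.

Lemma sub_eq_card (A B : {set T}) : A \subset B -> #|B| <= #|A| -> A = B.
Proof. by move=> s c; apply/eqP; rewrite eqEcard s c. Qed.

Lemma k23_aux x x' y : x != x' -> ~~ e x x' -> e x y -> e x' y ->
  [/\ #|f x :&: f x'| + 2 = k, f x :&: f x' \subset f y &
      exists2 z, z \in f y & z \in f x :\: f x'].
Proof.
move=> xx' nxx' exy ex'y.
have m2 := NONADJ finj fcl fe xx' nxx'.
have cA := ADJ fe exy; have cB := ADJ fe ex'y.
rewrite setIC in cA; rewrite setIC in cB.
have u := cardsUI (f y :&: f x) (f y :&: f x').
have u1 : #|f y :&: f x :|: f y :&: f x'| <= k.
  by rewrite -(cf y) subset_leq_card // -setIUr subsetIl.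
rewrite YI_eq in u.
have u2 : #|f y :&: (f x :&: f x')| <= #|f x :&: f x'|.
  by rewrite subset_leq_card // subsetIr.
have eI : f y :&: (f x :&: f x') = f x :&: f x'.
  by apply: sub_eq_card; [rewrite subsetIr | lia].
split; first lia.
  by rewrite -eI subsetIl.
have := cardsID (f x') (f y :&: f x).
rewrite -setIA eI cA => h.
have : 0 < #|f y :&: f x :\: f x'| by lia.
case/card_gt0P=> z; rewrite !inE => /andP[zx' /andP[zy zx]].
by exists z; rewrite // !inE zx' zx.
Qed.

Lemma k23 x x' y1 y2 y3 : x != x' -> ~~ e x x' ->
  y1 != y2 -> y1 != y3 -> y2 != y3 ->
  ~~ e y1 y2 -> ~~ e y1 y3 -> ~~ e y2 y3 ->
  e x y1 -> e x y2 -> e x y3 -> e x' y1 -> e x' y2 -> e x' y3 -> False.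
Proof.
move=> xx' nxx' d12 d13 d23 n12 n13 n23 a1 a2 a3 b1 b2 b3.
have [m2 s1 [z1 z1y z1P]] := k23_aux xx' nxx' a1 b1.
have [_ s2 [z2 z2y z2P]] := k23_aux xx' nxx' a2 b2.
have [_ s3 [z3 z3y z3P]] := k23_aux xx' nxx' a3 b3.
have P2 : #|f x :\: f x'| = 2.
  by have := cardsID (f x') (f x); rewrite cf => h; clear -m2 h; lia.
have same : forall y y' z, y != y' -> ~~ e y y' -> z \in f y -> z \in f y' ->
    f x :&: f x' \subset f y -> f x :&: f x' \subset f y' -> z \in f x :\: f x' -> False.
  move=> y y' z yy' nyy' zy zy' sy sy' zP.
  move/negP: nyy'; apply; apply: (KEY finj fcl fe yy').
  have zI : z \notin f x :&: f x' by move: zP; rewrite !inE => /andP[/negPf -> ->].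
  have : #|z |: (f x :&: f x')| = k.-1 by rewrite cardsU1 zI; clear -m2; lia.
  move=> <-; apply: subset_leq_card.
  by rewrite subUset sub1set !inE zy zy' /= subsetI sy sy'.
move/eqP: P2 => /cards2P [p [q [pq eP]]].
move: z1P z2P z3P; rewrite eP !inE.
move=> /orP[]/eqP e1 /orP[]/eqP e2 /orP[]/eqP e3;
  subst z1 z2 z3;
  first [ by apply: (same _ _ _ d12 n12 z1y z2y s1 s2); rewrite eP !inE eqxx ?orbT
        | by apply: (same _ _ _ d13 n13 z1y z3y s1 s3); rewrite eP !inE eqxx ?orbT
        | by apply: (same _ _ _ d23 n23 z2y z3y s2 s3); rewrite eP !inE eqxx ?orbT ].
Qed.

Lemma book_sub x x' y : e x x' -> e x y -> e x' y -> ~~ (f x :&: f x' \subset f y) ->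
  f y \subset f x :|: f x'.
Proof.
move=> exx' exy ex'y nI.
have cI := ADJ fe exx'.
have cA := ADJ fe exy; have cB := ADJ fe ex'y.
rewrite setIC in cA; rewrite setIC in cB.
have u := cardsUI (f y :&: f x) (f y :&: f x').
rewrite YI_eq -setIUr in u.
have lt : #|f y :&: (f x :&: f x')| < k.-1.
  rewrite -cI ltn_neqAle subset_leq_card ?subsetIr // andbT.
  apply/negP=> /eqP h; move/negP: nI; apply.
  have -> : f x :&: f x' = f y :&: (f x :&: f x').
    by apply/esym/sub_eq_card; rewrite ?subsetIr ?h.
  by apply: subsetIl.
have : f y :&: (f x :|: f x') = f y.
  by apply: sub_eq_card; [apply: subsetIl | rewrite cf; clear -u lt cA cB kpos; lia].
by move <-; apply: subsetIr.
Qed.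

Lemma book3 x x' y1 y2 y3 : e x x' ->
  y1 != y2 -> y1 != y3 -> y2 != y3 ->
  ~~ e y1 y2 -> ~~ e y1 y3 -> ~~ e y2 y3 ->
  e x y1 -> e x y2 -> e x y3 -> e x' y1 -> e x' y2 -> e x' y3 -> False.
Proof.
move=> exx' d12 d13 d23 n12 n13 n23 a1 a2 a3 b1 b2 b3.
have cI := ADJ fe exx'.
have cU : #|f x :|: f x'| = k.+1 by have := cardsUI (f x) (f x'); rewrite !cf cI => h; clear -h kpos; lia.
have both_in : forall y y', y != y' -> ~~ e y y' ->
    f x :&: f x' \subset f y -> f x :&: f x' \subset f y' -> False.
  move=> y y' yy' nyy' sy sy'; move/negP: nyy'; apply; apply: (KEY finj fcl fe yy').
  by rewrite -cI; apply: subset_leq_card; rewrite subsetI sy sy'.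
have both_out : forall y y', y != y' -> ~~ e y y' -> e x y -> e x' y -> e x y' -> e x' y' ->
    ~~ (f x :&: f x' \subset f y) -> ~~ (f x :&: f x' \subset f y') -> False.
  move=> y y' yy' nyy' ay by_ ay' by' sy sy'; move/negP: nyy'; apply.
  apply: (KEY finj fcl fe yy').
  have Uy := book_sub exx' ay by_ sy; have Uy' := book_sub exx' ay' by' sy'.
  have := cardsUI (f y) (f y'); rewrite !cf.
  have : #|f y :|: f y'| <= k.+1 by rewrite -cU subset_leq_card // subUset Uy Uy'.
  move=> h1 h2; clear -h1 h2 kpos; lia.
case s1: (f x :&: f x' \subset f y1); case s2: (f x :&: f x' \subset f y2);
case s3: (f x :&: f x' \subset f y3);
  first [ by apply: (both_in _ _ d12 n12)
        | by apply: (both_in _ _ d13 n13)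
        | by apply: (both_in _ _ d23 n23)
        | by apply: (both_out _ _ d12 n12 a1 b1 a2 b2); rewrite ?s1 ?s2
        | by apply: (both_out _ _ d13 n13 a1 b1 a3 b3); rewrite ?s1 ?s3
        | by apply: (both_out _ _ d23 n23 a2 b2 a3 b3); rewrite ?s2 ?s3 ].
Qed.

End TJ3.


Section TJ4.
Variables (V T : finType) (e : rel V) (H : rel T) (k : nat) (f : V -> {set T}).
Hypothesis finj : injective f.
Hypothesis fcl : forall A : {set T}, is_kclique H k A <-> exists x : V, f x = A.
Hypothesis fe : forall x y : V, e x y = (#|f x :&: f y| == k.-1).
Hypothesis k3 : 2 < k.

Let cf := card_f fcl.
Let kpos : 0 < k. Proof. by apply: leq_trans k3. Qed.

Lemma b2_core x x' w w' : e x x' -> e x w -> e x' w -> ~~ (f x :&: f x' \subset f w) ->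
  ~~ e w w' -> (forall z, [|| z == x, z == x', z == w | z == w']) -> False.
Proof.
move=> exx' exw ex'w nI nww' allv.
have cI := ADJ fe exx'.
have cU : #|f x :|: f x'| = k.+1.
  by have := cardsUI (f x) (f x'); rewrite !cf cI => h; clear -h k3; lia.
have WU : f w \subset f x :|: f x' := book_sub fcl fe kpos exx' exw ex'w nI.
have [c cI' cW] : exists2 c, c \in f x :&: f x' & c \notin f w.
  case/subsetPn: nI => c h1 h2; by exists c.
have cU' : c \in f x :|: f x' by move: cI'; rewrite !inE => /andP[-> _].
have UW : (f x :|: f x') :\: f w = [set c].
  have := cardsID (f w) (f x :|: f x'); rewrite (setIidPr WU) cf cU => h.
  have /cards1P [c0 e0] : #|(f x :|: f x') :\: f w| == 1.
    by apply/eqP; clear -h; lia.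
  have : c \in (f x :|: f x') :\: f w by rewrite inE cW cU'.
  by rewrite e0 inE => /eqP ->.
have inW a : a \in f x :|: f x' -> a \notin f x :&: f x' -> a \in f w.
  move=> aU aI; apply/negPn/negP => aW.
  have : a \in (f x :|: f x') :\: f w by rewrite inE aW aU.
  by rewrite UW inE => /eqP ac; move: aI; rewrite ac cI'.
have : 0 < #|(f x :&: f x') :\ c|.
  by have := cardsD1 c (f x :&: f x'); rewrite cI' cI => h; clear -h k3; lia.
case/card_gt0P=> c'; rewrite inE => /andP[c'c c'I].
have c'U : c' \in f x :|: f x' by move: c'I; rewrite !inE => /andP[-> _].
have cZ : #|(f x :|: f x') :\ c'| = k.
  by have := cardsD1 c' (f x :|: f x'); rewrite c'U cU => h; clear -h; lia.
have Ucl : forall a b, a \in f x :|: f x' -> b \in f x :|: f x' -> a != b -> H a b.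
  move=> a b aU bU ab.
  case/boolP: ((a \in f x) && (b \in f x)) => [/andP[ax bx]|n1].
    exact: (f_adj fcl (x:=x)).
  case/boolP: ((a \in f x') && (b \in f x')) => [/andP[ax bx]|n2].
    exact: (f_adj fcl (x:=x')).
  apply: (f_adj fcl (x:=w)) _ _ ab; apply: inW => //; move: aU bU n1 n2; rewrite !inE;
    by case: (a \in f x); case: (a \in f x'); case: (b \in f x); case: (b \in f x').
have [z fz] : exists z, f z = (f x :|: f x') :\ c'.
  apply/fcl; rewrite /is_kclique cZ eqxx /=.
  apply/forallP=> a; apply/implyP=> aZ; apply/forallP=> b; apply/implyP=> bZ.
  apply/implyP=> ab; move: aZ bZ; rewrite !inE => /andP[_ aU] /andP[_ bU].
  by apply: Ucl; rewrite // inE.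
have c'X : c' \in f x by move: c'I; rewrite inE => /andP[].
have c'X' : c' \in f x' by move: c'I; rewrite inE => /andP[].
have c'Z : c' \notin f z by rewrite fz !inE eqxx.
have cc' : c != c' by apply: contraNneq c'c => <-; rewrite inE.
have cZ' : c \in f z by rewrite fz in_setD1 cc' cU'.
have ZW : f z :|: f w = f x :|: f x'.
  apply/eqP; rewrite eqEsubset subUset fz subD1set WU /=.
  apply/subsetP=> u uU; rewrite !inE.
  case: (eqVneq u c') => [->|uc'] /=; last by rewrite -in_setU uU.
  have : c' \in f w.
    apply/negPn/negP => h; have : c' \in (f x :|: f x') :\: f w by rewrite inE h c'U.
    by rewrite UW (negbTE c'c).
  by [].
have ewz : e w z.
  rewrite fe setIC; have := cardsUI (f z) (f w); rewrite ZW cU !cf => h.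
  by apply/eqP; clear -h; lia.
have := allv z; rewrite -!(inj_eq finj).
have -> : (f z == f x) = false by apply/negbTE/negP => /eqP zx; move: c'Z; rewrite zx c'X.
have -> : (f z == f x') = false by apply/negbTE/negP => /eqP zx; move: c'Z; rewrite zx c'X'.
have -> : (f z == f w) = false by apply/negbTE/negP => /eqP zx; move: cZ'; rewrite zx (negbTE cW).
rewrite /= (inj_eq finj) => /eqP zw'.
by move: nww'; rewrite -zw' ewz.
Qed.

End TJ4.


Lemma card_sumS (A B : finType) (S : {set A + B}) :
  #|S| = #|inl @^-1: S| + #|inr @^-1: S|.
Proof.
by rewrite -!sum1_card (big_sumType _ (fun t => t \in S)); congr (_ + _);
  apply: eq_bigl => ?; rewrite inE.
Qed.

Definition clq (U : finType) (h : rel U) (S : {set U}) :=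
  [forall x in S, forall y in S, (x != y) ==> h x y].

Lemma clqP (U : finType) (h : rel U) (S : {set U}) :
  reflect (forall a b, a \in S -> b \in S -> a != b -> h a b) (clq h S).
Proof.
apply: (iffP forallP) => [H a b aS bS ab|H a].
  by have /implyP/(_ aS)/forallP/(_ b)/implyP/(_ bS)/implyP/(_ ab) := H a.
by apply/implyP=> aS; apply/forallP=> b; apply/implyP=> bS; apply/implyP; apply: H.
Qed.

Section Lift.
Variables (V U : finType) (e : rel V) (h : rel U) (j : nat) (f : V -> {set U}).
Hypothesis jpos : 0 < j.
Hypothesis hs : simple_graph h.
Hypothesis finj : injective f.
Hypothesis fcl : forall A : {set U}, is_kclique h j A <-> exists x : V, f x = A.
Hypothesis fe : forall x y : V, e x y = (#|f x :&: f y| == j.-1).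
Hypothesis nobig : forall S : {set U}, clq h S -> #|S| <= j.
Variable c : nat.

Definition LH : rel ('I_c + U)%type := fun a b =>
  match a, b with
  | inl a, inl b => a != b
  | inr a, inr b => h a b
  | _, _ => true
  end.

Definition Lf (x : V) : {set 'I_c + U} :=
  [set t | if t is inr u then u \in f x else true].

Lemma Lf_l x : inl @^-1: Lf x = setT.
Proof. by apply/setP=> a; rewrite !inE. Qed.
Lemma Lf_r x : inr @^-1: Lf x = f x.
Proof. by apply/setP=> a; rewrite !inE. Qed.

Lemma card_Lf x : #|Lf x| = c + j.
Proof. by rewrite card_sumS Lf_l Lf_r cardsT card_ord (card_f fcl). Qed.

Lemma LH_simple : simple_graph LH.
Proof.
case: hs => hsym hirr; split.
  move=> [a|a] [b|b] //=; first by rewrite eq_sym.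
by move=> [a|a] /=; rewrite ?eqxx ?hirr.
Qed.

Lemma Lf_inj : injective Lf.
Proof. by move=> x y exy; apply: finj; rewrite -Lf_r exy Lf_r. Qed.

Lemma Lf_cl A : is_kclique LH (c + j) A <-> exists x, Lf x = A.
Proof.
split.
  case/andP=> /eqP cA /clqP cl.
  have c1 : #|inl @^-1: A| <= c by apply: leq_trans (max_card _) _; rewrite card_ord.
  have cl2 : clq h (inr @^-1: A).
    apply/clqP=> a b; rewrite !inE => aA bA ab.
    by have := cl _ _ aA bA; rewrite /= (inj_eq inr_inj) => /(_ ab).
  have c2 := nobig cl2.
  have := card_sumS A; rewrite cA => cs.
  set a1 := #|inl @^-1: A| in c1 cs *. set a2 := #|inr @^-1: A| in c2 cs *.
  have e2 : a2 = j by clear -cs c1 c2; lia.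
  have e1 : inl @^-1: A = setT.
    by apply/eqP; rewrite eqEcard subsetT cardsT card_ord; clear -cs c2; lia.
  have [x fx] : exists x, f x = inr @^-1: A.
    apply/fcl; apply/andP; split; [apply/eqP; exact: e2 | exact: cl2].
  exists x; apply/setP=> -[a|u]; rewrite inE.
    by move/setP: e1 => /(_ a); rewrite !inE => ->.
  by rewrite fx inE.
case=> x <-; rewrite /is_kclique card_Lf eqxx /=.
apply/clqP=> -[a|a] [b|b] //=; rewrite ?inE.
move=> ha hb; rewrite (inj_eq inr_inj); exact: (f_adj fcl ha hb).
Qed.

Lemma Lf_e x y : e x y = (#|Lf x :&: Lf y| == (c + j).-1).
Proof.
rewrite fe card_sumS !preimsetI Lf_l Lf_r Lf_l Lf_r setIT cardsT card_ord.
by rewrite -(prednK jpos) addnS /= eqn_add2l.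
Qed.

End Lift.

Lemma lift_KTJ (V U : finType) (e : rel V) (h : rel U) (j : nat) (f : V -> {set U}) :
  0 < j -> simple_graph h -> injective f ->
  (forall A : {set U}, is_kclique h j A <-> exists x : V, f x = A) ->
  (forall x y : V, e x y = (#|f x :&: f y| == j.-1)) ->
  (forall S : {set U}, clq h S -> #|S| <= j) ->
  forall k, j <= k -> KTJ e k.
Proof.
move=> jpos hs finj fcl fe nb k jk; split; first by apply: leq_trans jk.
have -> : k = (k - j) + j by rewrite subnK.
exists ('I_(k - j) + U)%type, (@LH U h (k - j)); split; first exact: LH_simple.
exists (@Lf V U f (k - j)); split; first exact: Lf_inj.
split; first exact: Lf_cl.
exact: Lf_e.
Qed.


Lemma KTJ_complete (V : finType) (e : rel V) :
  (forall x y, e x y = (x != y)) -> forall k, 1 <= k -> KTJ e k.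
Proof.
move=> he k k1.
apply: (@lift_KTJ V V e (fun _ _ => false) 1 (fun x => [set x])) => //.
- by move=> x y /set1_inj.
- move=> A; split.
    case/andP=> /cards1P [x ->] _; by exists x.
  case=> x <-; rewrite /is_kclique cards1 eqxx /=.
  apply/forallP=> a; apply/implyP; rewrite inE => /eqP ->.
  by apply/forallP=> b; apply/implyP; rewrite inE => /eqP ->; rewrite eqxx.
- move=> x y; rewrite he /=.
  case: (eqVneq x y) => [->|xy]; first by rewrite setIid cards1.
  apply/esym/eqP; apply/eqP; rewrite cards_eq0; apply/eqP/setP=> z; rewrite !inE.
  by apply/negP=> /andP[/eqP -> /eqP]; apply/eqP.
- move=> S /clqP cl; rewrite leqNgt; apply/negP => /card_gt1P [a [b [aS bS ab]]].
  by have := cl _ _ aS bS ab.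
Qed.

Lemma clique2P (U : finType) (h : rel U) (A : {set U}) : symmetric h ->
  is_kclique h 2 A <-> exists a b, [/\ a != b, h a b & A = [set a; b]].
Proof.
move=> hsym; split.
  case/andP=> /cards2P [a [b [ab eA]]] /clqP cl; exists a, b; split => //.
  by apply: cl => //; rewrite eA !inE eqxx ?orbT.
case=> a [b [ab hab ->]]; rewrite /is_kclique cards2 ab /=.
apply/clqP=> x y; rewrite !inE => /orP[]/eqP -> /orP[]/eqP ->; rewrite ?eqxx //.
by rewrite hsym.
Qed.

Lemma card2I (U : finType) (a b : U) (S : {set U}) : a != b ->
  #|[set a; b] :&: S| = (a \in S) + (b \in S).
Proof.
move=> ab; case aS: (a \in S); case bS: (b \in S).
- have -> : [set a; b] :&: S = [set a; b].
    by apply/setIidPl/subsetP=> z; rewrite !inE => /orP[]/eqP ->.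
  by rewrite cards2 ab.
- have -> : [set a; b] :&: S = [set a].
    apply/setP=> z; rewrite !inE; case: (eqVneq z a) => [->|za] //=; rewrite ?aS //.
    by case: (eqVneq z b) => [->|] //=; rewrite bS.
  by rewrite cards1.
- have -> : [set a; b] :&: S = [set b].
    apply/setP=> z; rewrite !inE; case: (eqVneq z b) => [->|zb] //=; rewrite ?bS ?orbT //.
    by case: (eqVneq z a) => [->|] //=; rewrite aS.
  by rewrite cards1.
- have -> : [set a; b] :&: S = set0.
    apply/setP=> z; rewrite !inE.
    by apply/negbTE/andP => -[/orP[]/eqP ->]; rewrite ?aS ?bS.
  by rewrite cards0.
Qed.


Lemma inord_eq n a b : a <= n -> b <= n -> (inord a == inord b :> 'I_n.+1) = (a == b).
Proof. by move=> ha hb; rewrite -val_eqE /= !inordK. Qed.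

Lemma path_simple n : simple_graph (path_rel n).
Proof.
split; first by move=> x y; rewrite /path_rel orbC.
by move=> x; rewrite /path_rel; lia.
Qed.

Lemma path_nobig n (S : {set 'I_n}) : clq (path_rel n) S -> #|S| <= 2.
Proof.
move/clqP=> cl; rewrite leqNgt; apply/negP=> /card_gt2P [a [b [c [[aS bS cS] [ab bc ca]]]]].
have := cl _ _ aS bS ab; have := cl _ _ bS cS bc; have := cl _ _ cS aS ca.
rewrite /path_rel; lia.
Qed.

Lemma KTJ_path n : 0 < n -> forall k, 2 <= k -> KTJ (path_rel n) k.
Proof.
move=> n0 k k2.
pose f (i : 'I_n) : {set 'I_n.+1} := [set inord i; inord i.+1].
have memf a (y : 'I_n) : a <= n -> (inord a \in f y) = (a == (y : nat)) || (a == y.+1).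
  move=> an; rewrite !inE !inord_eq //; have := ltn_ord y; lia.
have cardf (x y : 'I_n) : #|f x :&: f y| = (((x : nat) == y) || ((x : nat) == y.+1)) + ((x.+1 == y) || (x.+1 == y.+1)).
  have hx := ltn_ord x.
  rewrite card2I ?memf //; try lia.
  rewrite inord_eq; lia.
apply: (@lift_KTJ 'I_n 'I_n.+1 (path_rel n) (path_rel n.+1) 2 f) => //.
- exact: path_simple.
- move=> x y fxy; apply: ord_inj.
  have := cardf x y; rewrite fxy setIid.
  have := cardf y y; rewrite setIid; lia.
- move=> A; rewrite clique2P; last by case: (path_simple n.+1).
  split.
    case=> a [b [ab hab ->]].
    move: hab; rewrite /path_rel => /orP[]/eqP hab.
      have an : a < n by have := ltn_ord b; lia.
      have e1 : (inord a : 'I_n.+1) = a by rewrite inord_val.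
      have e2 : (inord a.+1 : 'I_n.+1) = b by apply: ord_inj; rewrite inordK ?hab.
      by exists (Ordinal an); rewrite /f /= e1 e2.
    have bn : b < n by have := ltn_ord a; lia.
    have e1 : (inord b : 'I_n.+1) = b by rewrite inord_val.
    have e2 : (inord b.+1 : 'I_n.+1) = a by apply: ord_inj; rewrite inordK ?hab.
    by exists (Ordinal bn); rewrite /f /= e1 e2 setUC.
  case=> x <-; exists (inord x), (inord x.+1); split => //.
    by move: (ltn_ord x) => hx; rewrite inord_eq; lia.
  by move: (ltn_ord x) => hx; rewrite /path_rel !inordK; lia.
- by move=> x y; rewrite cardf /path_rel; lia.
- exact: path_nobig.
Qed.


Lemma modS x n : x < n -> (x.+1 %% n = x.+1 /\ x.+1 < n) \/ (x.+1 %% n = 0 /\ x.+1 = n).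
Proof.
move=> xn; case: (ltngtP x.+1 n) => h.
- by left; rewrite modn_small.
- lia.
- by right; rewrite h modnn.
Qed.

Ltac mods x := case: (modS (ltn_ord x)) => [[-> ?]|[-> ?]].

Lemma cycle_simple n : 2 < n -> simple_graph (cycle_rel n).
Proof.
move=> n3; split; first by move=> x y; rewrite /cycle_rel orbC.
by move=> x; rewrite /cycle_rel; mods x; lia.
Qed.

Lemma cycle_nobig n (S : {set 'I_n}) : 3 < n -> clq (cycle_rel n) S -> #|S| <= 2.
Proof.
move=> n4 /clqP cl; rewrite leqNgt; apply/negP=> /card_gt2P [a [b [c [[aS bS cS] [ab bc ca]]]]].
have := cl _ _ aS bS ab; have := cl _ _ bS cS bc; have := cl _ _ cS aS ca.
move: ab bc ca; rewrite -!val_eqE /= /cycle_rel.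
by mods a; mods b; mods c; lia.
Qed.

Lemma KTJ_cycle n : 3 < n -> forall k, 2 <= k -> KTJ (cycle_rel n) k.
Proof.
case: n => [//|m] n4 k k2.
pose f (i : 'I_m.+1) : {set 'I_m.+1} := [set i; inord (i.+1 %% m.+1)].
have lem (y : 'I_m.+1) : y.+1 %% m.+1 <= m by rewrite -ltnS ltn_mod.
have eqi (a : 'I_m.+1) t : t <= m -> (a == inord t) = ((a : nat) == t).
  by move=> tm; rewrite -val_eqE /= inordK.
have memf (a y : 'I_m.+1) : (a \in f y) = ((a : nat) == y) || ((a : nat) == y.+1 %% m.+1).
  by rewrite !inE eqi.
have cardf (x y : 'I_m.+1) : #|f x :&: f y| =
    (((x : nat) == y) || ((x : nat) == y.+1 %% m.+1)) +
    ((x.+1 %% m.+1 == y) || (x.+1 %% m.+1 == y.+1 %% m.+1)).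
  rewrite card2I; last by rewrite eqi //; mods x; lia.
  by rewrite !memf inordK // ltn_mod.
refine (@lift_KTJ _ _ (cycle_rel m.+1) (cycle_rel m.+1) 2 f _ _ _ _ _ _ k k2) => //.
- by apply: cycle_simple; lia.
- move=> x y fxy; apply: ord_inj.
  have := cardf x y; rewrite fxy setIid.
  have := cardf y y; rewrite setIid.
  by mods x; mods y; lia.
- have cs : simple_graph (cycle_rel m.+1) by apply: cycle_simple; lia.
  move=> A; rewrite clique2P; last by case: cs.
  split.
    case=> a [b [ab hab ->]].
    move: hab; rewrite /cycle_rel => /orP[]/eqP hab.
      have e2 : (inord (a.+1 %% m.+1) : 'I_m.+1) = b by apply: ord_inj; rewrite inordK ?hab.
      by exists a; rewrite /f e2.
    have e2 : (inord (b.+1 %% m.+1) : 'I_m.+1) = a by apply: ord_inj; rewrite inordK ?hab.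
    by exists b; rewrite /f e2 setUC.
  case=> x <-; exists x, (inord (x.+1 %% m.+1)); split => //.
    by rewrite eqi //; mods x; lia.
  by rewrite /cycle_rel inordK ?ltn_mod // eqxx.
- by move=> x y; rewrite cardf /cycle_rel; mods x; mods y; lia.
- by move=> S; apply: cycle_nobig.
Qed.


Section Gadget.
Variables (W : finType) (j : nat) (m : W -> 'I_j).
Hypothesis jpos : 0 < j.

Definition gh : rel ('I_j + W)%type := fun a b =>
  match a, b with
  | inl a, inl b => a != b
  | inl a, inr w => a != m w
  | inr w, inl a => a != m w
  | inr _, inr _ => false
  end.

Definition gf (o : option W) : {set 'I_j + W} :=
  if o is Some w then [set t | match t with inl a => a != m w | inr w' => w' == w end]
  else [set t | if t is inl _ then true else false].

Definition gadj : rel (option W) := fun o o' =>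
  match o, o' with
  | None, None => false
  | Some w, Some w' => (w != w') && (m w == m w')
  | _, _ => true
  end.

Lemma gf_l o : inl @^-1: gf o = if o is Some w then [set~ m w] else setT.
Proof. by case: o => [w|]; apply/setP=> a; rewrite !inE. Qed.
Lemma gf_r o : inr @^-1: gf o = if o is Some w then [set w] else set0.
Proof. by case: o => [w|]; apply/setP=> a; rewrite !inE. Qed.

Lemma card_gf o : #|gf o| = j.
Proof.
rewrite card_sumS gf_l gf_r; case: o => [w|].
  by rewrite cards1 cardsC1 card_ord; clear -jpos; lia.
by rewrite cardsT cards0 card_ord addn0.
Qed.

Lemma gh_simple : simple_graph gh.
Proof.
split; last by case=> [a|w] /=; rewrite ?eqxx.
by case=> [a|w] [b|w'] //=; rewrite eq_sym.
Qed.

Lemma shape (S : {set 'I_j + W}) : clq gh S ->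
  inr @^-1: S = set0 \/ exists w, inr @^-1: S = [set w] /\ inl @^-1: S \subset [set~ m w].
Proof.
move/clqP=> cl; case: (set_0Vmem (inr @^-1: S)) => [->|[w]]; [by left|rewrite inE => wS].
right; exists w; split.
  apply/setP=> w'; rewrite !inE; apply/idP/eqP => [w'S|->//].
  apply/eqP; apply/negPn/negP => ww'.
  by have := cl _ _ w'S wS; rewrite /= (inj_eq inr_inj) => /(_ ww').
apply/subsetP=> a; rewrite !inE => aS; apply/negP=> /eqP am.
by have := cl _ _ aS wS; rewrite /= am eqxx => /(_ isT).
Qed.

Lemma gh_nobig S : clq gh S -> #|S| <= j.
Proof.
move=> cl; rewrite card_sumS; case: (shape cl) => [->|[w [-> s]]].
  by rewrite cards0 addn0; apply: leq_trans (max_card _) _; rewrite card_ord.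
rewrite cards1 addn1; apply: (leq_ltn_trans (subset_leq_card s)); rewrite cardsC1 card_ord; clear -jpos; lia.
Qed.

Lemma gf_inj : injective gf.
Proof.
move=> o o' e; have := gf_r o; rewrite e gf_r.
case: o e => [w|]; case: o' => [w'|] // e.
- by move/setP=> /(_ w); rewrite !inE eqxx => h; congr Some; apply/eqP; rewrite h.
- by move/setP=> /(_ w); rewrite !inE eqxx.
- by move/setP=> /(_ w'); rewrite !inE eqxx.
Qed.

Lemma gf_cl A : is_kclique gh j A <-> exists o, gf o = A.
Proof.
split; last first.
  case=> o <-; rewrite /is_kclique card_gf eqxx /=.
  apply/clqP=> -[a|w] [b|w']; case: o => [v|]; rewrite !inE //=.
  - by move=> ? /eqP ->.
  - by move=> /eqP -> ?.
  - by move=> /eqP -> /eqP ->; rewrite eqxx.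
case/andP=> /eqP cA cl; have := card_sumS A; rewrite cA.
case: (shape cl) => [e0|[w [e1 s]]].
  rewrite e0 cards0 addn0 => h; exists None.
  have eT : inl @^-1: A = setT.
    by apply/eqP; rewrite eqEcard subsetT cardsT card_ord /=; apply: eq_leq.
  apply/setP=> -[a|w]; rewrite inE.
    by move/setP: eT => /(_ a); rewrite !inE => ->.
  by move/setP: e0 => /(_ w); rewrite !inE => ->.
rewrite e1 cards1 => h; exists (Some w).
have eT : inl @^-1: A = [set~ m w].
  rewrite addn1 in h; apply/eqP; rewrite eqEcard s cardsC1 card_ord /=; apply: eq_leq; exact: (f_equal predn h).
apply/setP=> -[a|w']; rewrite inE.
  by move/setP: eT => /(_ a); rewrite !inE => ->.
by move/setP: e1 => /(_ w'); rewrite !inE => ->.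
Qed.

Lemma cardC2 (a b : 'I_j) : #|[set~ a] :&: [set~ b]| = j - (a != b).+1.
Proof.
rewrite -setCU -cards2; have := cardsC [set a; b]; rewrite card_ord; lia.
Qed.

Lemma card11 (w w' : W) : #|[set w] :&: [set w']| = (w == w').
Proof.
case: (eqVneq w w') => [->|ww']; first by rewrite setIid cards1.
suff -> : [set w] :&: [set w'] = set0 by rewrite cards0.
apply/setP=> z; rewrite !inE.
by apply/negbTE/andP => -[/eqP -> /eqP h]; rewrite h eqxx in ww'.
Qed.

Lemma gf_e o o' : gadj o o' = (#|gf o :&: gf o'| == j.-1).
Proof.
rewrite card_sumS !preimsetI !gf_l !gf_r.
case: o => [w|]; case: o' => [w'|] /=.
- rewrite cardC2 card11; case: (eqVneq w w') => [->|ww'] /=; first by rewrite eqxx; clear -jpos; lia.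
  case: (eqVneq (m w) (m w')) => [_|mm] /=; first by clear -jpos; lia.
  have j2 : 1 < j.
    move: mm; rewrite -val_eqE /=; have := ltn_ord (m w); have := ltn_ord (m w'); clear; lia.
  clear -j2; lia.
- by rewrite setIT setI0 cards0 addn0 cardsC1 card_ord eqxx.
- by rewrite setTI set0I cards0 addn0 cardsC1 card_ord eqxx.
- by rewrite setIT setI0 cards0 cardsT card_ord; clear -jpos; lia.
Qed.

Lemma gadget_KTJ (V : finType) (e : rel V) (g : V -> option W) :
  bijective g -> (forall x y, e x y = gadj (g x) (g y)) -> forall k, j <= k -> KTJ e k.
Proof.
move=> [g' gK g'K] he.
apply: (@lift_KTJ V _ e gh j (fun x => gf (g x))) => //.
- exact: gh_simple.
- by move=> x y /gf_inj /(can_inj gK).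
- move=> A; rewrite gf_cl; split=> -[o <-].
    by exists (g' o); rewrite g'K.
  by exists (g o).
- by move=> x y; rewrite he gf_e.
- exact: gh_nobig.
Qed.

End Gadget.


Definition p1 (n : nat) := match n with 0 => 1 | 1 => 0 | 2 => 0 | _ => 2 end.
Definition p2 (n : nat) := match n with 0 => 2 | 1 => 2 | 2 => 1 | _ => 3 end.
Definition pawc (x y : nat) :=
  (x != y) && ((x == 3) ==> (y == 2)) && ((y == 3) ==> (x == 2)).
Definition paw : rel 'I_4 := fun a b => pawc a b.
Definition pf (i : 'I_4) : {set 'I_4} := [set inord (p1 i); inord (p2 i)].

Lemma p1le n : p1 n <= 3. Proof. by case: n => [|[|[|n]]]. Qed.
Lemma p2le n : p2 n <= 3. Proof. by case: n => [|[|[|n]]]. Qed.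

Lemma KTJ_B2 : KTJ (book_rel 2) 2.
Proof.
split => //; exists 'I_4, paw; split.
  split; first by move=> x y; rewrite /paw /pawc; lia.
  by move=> x; rewrite /paw /pawc eqxx.
exists pf.
have memf a (y : 'I_4) : a <= 3 -> (inord a \in pf y) = (a == p1 y) || (a == p2 y).
  by move=> a3; rewrite !inE !inord_eq // ?p1le ?p2le.
have cardf (x y : 'I_4) : #|pf x :&: pf y| =
    ((p1 x == p1 y) || (p1 x == p2 y)) + ((p2 x == p1 y) || (p2 x == p2 y)).
  rewrite card2I ?memf ?p1le ?p2le // inord_eq ?p1le ?p2le //.
  by case: x => [[|[|[|[|x]]]] Hx].
split.
  move=> x y fxy; have := cardf x y; rewrite fxy setIid; have := cardf y y; rewrite setIid.
  move=> -> ; apply: contra_eq => xy; clear fxy.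
  by case: x y xy => [[|[|[|[|x]]]] Hx] // [[|[|[|[|y]]]] Hy].
split; last first.
  move=> x y; rewrite cardf.
  by case: x => [[|[|[|[|x]]]] Hx] // ; case: y => [[|[|[|[|y]]]] Hy].
move=> A; rewrite clique2P; last by move=> x y; rewrite /paw /pawc; lia.
split.
  case=> a [b [ab hab ->]].
  rewrite -[a]inord_val -[b]inord_val.
  move: ab hab; rewrite /paw /pawc -val_eqE /=.
  case: a b => [va Ha] [vb Hb] /=.
  case: va Ha => [|[|[|[|va]]]] Ha //; case: vb Hb => [|[|[|[|vb]]]] Hb // _ _;
  first [ by exists (inord 0); rewrite /pf inordK //=; first [done | rewrite setUC]
        | by exists (inord 1); rewrite /pf inordK //=; first [done | rewrite setUC]
        | by exists (inord 2); rewrite /pf inordK //=; first [done | rewrite setUC]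
        | by exists (inord 3); rewrite /pf inordK //=; first [done | rewrite setUC] ].
case=> x <-; exists (inord (p1 x)), (inord (p2 x)); split => //.
  by rewrite inord_eq ?p1le ?p2le //; case: x => [[|[|[|[|x]]]] Hx].
by rewrite /paw !inordK ?ltnS ?p1le ?p2le //; case: x => [[|[|[|[|x]]]] Hx].
Qed.


Lemma KTJ_sym (V : finType) (e : rel V) k : KTJ e k -> symmetric e.
Proof. by case=> _ [T [H [_ [f [_ [_ fe]]]]]] x y; rewrite !fe setIC. Qed.

Lemma rookK (V : finType) (e : rel V) k x (N : {set V}) : KTJ e k ->
  (forall y, y \in N -> e x y) ->
  (forall y y', y \in N -> y' \in N -> y != y' -> ~~ e y y') -> #|N| <= k.
Proof. case=> k1 [T [H [_ [f [fi [fc fe]]]]]]; exact: (rook fi fc fe k1). Qed.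

Lemma two_leaves (V : finType) (e : rel V) k x y z : KTJ e k -> e x y -> e x z -> y != z -> ~~ e y z -> 2 <= k.
Proof.
move=> K exy exz yz nyz; have sy := KTJ_sym K.
have := @rookK V e k x [set y; z] K; rewrite cards2 yz; apply.
  by move=> w /set2P[]->.
move=> a b /set2P[]-> /set2P[]->; rewrite ?eqxx // => _; by rewrite // sy.
Qed.


Lemma part1 n : 1 <= n -> forall k, KTJ (complete_rel n) k <-> 1 <= k.
Proof. by move=> _ k; split; [case | apply: KTJ_complete]. Qed.

Lemma part2a k : KTJ (path_rel 2) k <-> 1 <= k.
Proof.
split; first by case.
by apply: KTJ_complete; case=> [[|[|x]] Hx] // [[|[|y]] Hy].
Qed.

Lemma part2b n : 3 <= n -> forall k, KTJ (path_rel n) k <-> 2 <= k.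
Proof.
case: n => [//|n] n3 k; split; last by apply: KTJ_path.
move=> K; apply: (two_leaves (x := inord 1) (y := inord 0) (z := inord 2) K).
- by rewrite /path_rel !inordK //; lia.
- by rewrite /path_rel !inordK //; lia.
- by rewrite inord_eq //; lia.
- by rewrite /path_rel !inordK //; lia.
Qed.

Lemma part2c k : KTJ (cycle_rel 3) k <-> 1 <= k.
Proof.
split; first by case.
by apply: KTJ_complete; case=> [[|[|[|x]]] Hx] // [[|[|[|y]]] Hy].
Qed.

Lemma part2d n : 4 <= n -> forall k, KTJ (cycle_rel n) k <-> 2 <= k.
Proof.
case: n => [//|n] n4 k; split; last by apply: KTJ_cycle.
move=> K; apply: (two_leaves (x := inord 1) (y := inord 0) (z := inord 2) K).
- by rewrite /cycle_rel !inordK ?modn_small //; lia.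
- by rewrite /cycle_rel !inordK ?modn_small //; lia.
- by rewrite inord_eq //; lia.
- by rewrite /cycle_rel !inordK ?modn_small //; lia.
Qed.


Lemma star n : 0 < n -> forall k, KTJ (cbip_rel 1 n) k <-> n <= k.
Proof.
move=> n0 k; split.
  move=> K; have := @rookK _ _ k (inl ord0) [set inr i | i : 'I_n] K.
  rewrite card_imset ?card_ord; last exact: inr_inj.
  apply; first by move=> _ /imsetP[i _ ->].
  by move=> _ _ /imsetP[i _ ->] /imsetP[i' _ ->].
pose g (v : 'I_1 + 'I_n) : option 'I_n := if v is inr i then Some i else None.
apply: (@gadget_KTJ _ n id n0 _ _ g).
  exists (fun o => if o is Some i then inr i else inl ord0).
    by case=> [x|i] //=; rewrite (ord1 x).
  by case.
move=> [x|i] [y|i'] //=; by case: eqP.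
Qed.

Lemma kmn m n : 2 <= m -> m <= n -> 3 <= n -> forall k, ~ KTJ (cbip_rel m n) k.
Proof.
move=> m2 mn n3 k [k1 [T [H [_ [f [fi [fc fe]]]]]]].
have h0 : 0 < m by lia. have h1 : 1 < m by lia.
have g0 : 0 < n by lia. have g1 : 1 < n by lia. have g2 : 2 < n by lia.
apply: (k23 fi fc fe k1 (x := inl (Ordinal h0)) (x' := inl (Ordinal h1))
   (y1 := inr (Ordinal g0)) (y2 := inr (Ordinal g1)) (y3 := inr (Ordinal g2))) => //;
  by rewrite ?(inj_eq inl_inj) ?(inj_eq inr_inj) -val_eqE.
Qed.

Lemma part4a k : KTJ (book_rel 1) k <-> 1 <= k.
Proof.
split; first by case.
by apply: KTJ_complete; case=> [[|[|[|x]]] Hx] // [[|[|[|y]]] Hy].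
Qed.

Lemma part4c p : 3 <= p -> forall k, ~ KTJ (book_rel p) k.
Proof.
move=> p3 k [k1 [T [H [_ [f [fi [fc fe]]]]]]].
have be a b : a <= p.+1 -> b <= p.+1 -> book_rel p (inord a) (inord b) = (a != b) && ((a < 2) || (b < 2)).
  by move=> ha hb; rewrite /book_rel inord_eq // !inordK.
have ie a b : a <= p.+1 -> b <= p.+1 -> (inord a == inord b :> 'I_p.+2) = (a == b).
  by move=> ha hb; rewrite inord_eq.
apply: (book3 fi fc fe k1 (x := inord 0) (x' := inord 1)
   (y1 := inord 2) (y2 := inord 3) (y3 := inord 4));
  rewrite ?be ?ie //; lia.
Qed.


Lemma part4b k : KTJ (book_rel 2) k <-> k = 2.
Proof.
split; last by move=> ->; exact: KTJ_B2.
move=> K.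
have be a b : a <= 3 -> b <= 3 -> book_rel 2 (inord a) (inord b) = (a != b) && ((a < 2) || (b < 2)).
  by move=> ha hb; rewrite /book_rel inord_eq // !inordK.
have k2 : 2 <= k.
  apply: (two_leaves (x := inord 0) (y := inord 2) (z := inord 3) K); rewrite ?be ?inord_eq //.
case: (ltngtP k 2) => // k3; first by lia.
exfalso; case: K => k1 [T [H [_ [f [fi [fc fe]]]]]].
have allv a b (z : 'I_4) : a <= 3 -> b <= 3 -> a + b = 5 ->
    [|| z == inord 0, z == inord 1, z == inord a | z == inord b].
  move=> ha hb hab; rewrite -!val_eqE /= !inordK //.
  by case: z => [[|[|[|[|z]]]] Hz] //=; lia.
case s2: (f (inord 0) :&: f (inord 1) \subset f (inord 2)).
  case s3: (f (inord 0) :&: f (inord 1) \subset f (inord 3)).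
    have : book_rel 2 (inord 2) (inord 3).
      apply: (KEY fi fc fe); first by rewrite inord_eq.
      rewrite -(ADJ fe (_ : book_rel 2 (inord 0) (inord 1))); last by rewrite be.
      by apply: subset_leq_card; rewrite subsetI s2 s3.
    by rewrite be.
  apply: (b2_core fi fc fe k3 (x := inord 0) (x' := inord 1) (w := inord 3) (w' := inord 2)); rewrite ?be ?s3 //.
  by move=> z; apply: allv.
apply: (b2_core fi fc fe k3 (x := inord 0) (x' := inord 1) (w := inord 2) (w' := inord 3)); rewrite ?be ?s2 //.
by move=> z; apply: allv.
Qed.


Lemma friend p : 0 < p -> forall k, KTJ (friend_rel p) k <-> p <= k.
Proof.
move=> p0 k; split.
  move=> K.
  have tP (i : 'I_p) : i.*2 < p.*2 by rewrite ltn_double.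
  pose t (i : 'I_p) : 'I_p.*2.+1 := lift ord0 (Ordinal (tP i)).
  have := @rookK _ _ k ord0 [set t i | i : 'I_p] K.
  rewrite card_imset ?card_ord; last first.
    by move=> i i' /lift_inj/(congr1 val)/= /double_inj ei; apply: val_inj.
  apply.
    by move=> _ /imsetP[i _ ->]; rewrite /friend_rel neq_lift.
  move=> _ _ /imsetP[i _ ->] /imsetP[i' _ ->] ii'.
  rewrite /friend_rel /= ii' /= !doubleK.
  by move: ii'; apply: contra => /eqP ei; apply/eqP; congr t; apply: val_inj.
have mP (w : 'I_p.*2) : w./2 < p by rewrite ltn_half_double.
pose m (w : 'I_p.*2) : 'I_p := Ordinal (mP w).
apply: (@gadget_KTJ _ p m p0 _ _ (unlift ord0)).
  exists (fun o => if o is Some i then lift ord0 i else ord0).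
    by move=> v; case: unliftP.
  by case=> [i|] /=; rewrite ?liftK ?unlift_none.
move=> x y; case: (unliftP ord0 x) => [i ->|->]; case: (unliftP ord0 y) => [i' ->|->] //=.
Qed.


Theorem theorem4p8 :
  (* (1) complete graphs *)
  (forall n : nat, 1 <= n -> forall k : nat, KTJ (complete_rel n) k <-> 1 <= k) /\
  (* (2) paths and cycles *)
  (forall k : nat, KTJ (path_rel 2) k <-> 1 <= k) /\
  (forall n : nat, 3 <= n -> forall k : nat, KTJ (path_rel n) k <-> 2 <= k) /\
  (forall k : nat, KTJ (cycle_rel 3) k <-> 1 <= k) /\
  (forall n : nat, 4 <= n -> forall k : nat, KTJ (cycle_rel n) k <-> 2 <= k) /\
  (* (3) complete bipartite graphs *)
  (forall k : nat, KTJ (cbip_rel 1 1) k <-> 1 <= k) /\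
  (forall k : nat, KTJ (cbip_rel 1 2) k <-> 2 <= k) /\
  (forall n : nat, 3 <= n -> forall k : nat, KTJ (cbip_rel 1 n) k <-> n <= k) /\
  (forall m n : nat, 2 <= m -> m <= n -> 3 <= n -> forall k : nat, ~ KTJ (cbip_rel m n) k) /\
  (* (4) book graphs *)
  (forall k : nat, KTJ (book_rel 1) k <-> 1 <= k) /\
  (forall k : nat, KTJ (book_rel 2) k <-> k = 2) /\
  (forall p : nat, 3 <= p -> forall k : nat, ~ KTJ (book_rel p) k) /\
  (* (5) friendship graphs *)
  (forall k : nat, KTJ (friend_rel 1) k <-> 1 <= k) /\
  (forall p : nat, 2 <= p -> forall k : nat, KTJ (friend_rel p) k <-> p <= k).
Proof.
split; first exact: part1.
split; first exact: part2a.
split; first exact: part2b.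
split; first exact: part2c.
split; first exact: part2d.
split; first exact: star.
split; first exact: star.
split; first by move=> n n3; apply: star; apply: leq_trans n3.
split; first exact: kmn.
split; first exact: part4a.
split; first exact: part4b.
split; first exact: part4c.
split; first exact: friend.
by move=> p p2; apply: friend; apply: leq_trans p2.
Qed.
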